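(* For every $i\in\{0,1,2\}$, $\mathcal{Z}_2\equiv_{\mathrm{m}}\mathrm{Clo}(d_i)$.
   Context: On $\{0,1,2\}$, define $d_i(x,y,z)=\mathrm{min}(x,y,z)$ if $|\{x,y,z\}|\leq2$ and $d_i(x,y,z)=i$ if $|\{x,y,z\}|=3$, where $\mathrm{min}$ is the minority operation ($\mathrm{min}(x,y,y)=\mathrm{min}(y,x,y)=\mathrm{min}(y,y,x)=x$, and $\mathrm{min}(x,x,x)=x$). $\mathrm{Clo}(d_i)$ is the clone generated by $d_i$. $\mathcal{Z}_2=\mathrm{Pol}(\{0,1\};\{(x,y,z,x-y+z\bmod2)\},\{0\},\{1\})$ is the clone of idempotent affine operations modulo 2 on $\{0,1\}$. For an $n$-ary $f$ and $\sigma\colon[n]\to[r]$, $f_\sigma(x_1,\dots,x_r)=f(x_{\sigma(1)},\dots,x_{\sigma(n)})$; a minion homomorphism is an arity-preserving map $\xi$ between clones with $\xi(f_\sigma)=\xi(f)_\sigma$; $\equiv_{\mathrm{m}}$ means minion homomorphisms exist in both directions. *)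

(* Defs.v *)
From mathcomp Require Import all_boot all_algebra.
Set Implicit Arguments. Unset Strict Implicit. Unset Printing Implicit Defensive.
Import GRing.Theory.
Local Open Scope ring_scope.

(* n-ary operations on a finite set A: functions A^n -> A, where A^n is
   represented as finite functions 'I_n -> A (so equality is extensional). *)
Definition op (A : finType) (n : nat) := {ffun {ffun 'I_n -> A} -> A}.

Definition opset (A : finType) := forall n : nat, op A n -> Prop.

Definition minor (A : finType) (n r : nat) (sigma : 'I_n -> 'I_r) (f : op A n)
  : op A r := [ffun x : {ffun 'I_r -> A} => f [ffun i => x (sigma i)]].

Definition proj (A : finType) (n : nat) (i : 'I_n) : op A n :=
  [ffun x : {ffun 'I_n -> A} => x i].

(* Clo(d): the clone generated by a ternary operation d, i.e. the smallest set
   of operations containing all projections and closed under composition with d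
   (= the set of term operations of d). *)
Inductive Clo3 (A : finType) (d : op A 3) : opset A :=
| Clo3_proj n (i : 'I_n) : Clo3 d (proj A i)
| Clo3_comp n (g : 'I_3 -> op A n) :
    (forall j, Clo3 d (g j)) ->
    Clo3 d [ffun x : {ffun 'I_n -> A} => d [ffun j => g j x]].

Definition preserves (A : finType) (n k : nat) (f : op A n)
  (R : {ffun 'I_k -> A} -> Prop) : Prop :=
  forall rows : 'I_n -> {ffun 'I_k -> A},
    (forall i, R (rows i)) -> R [ffun j => f [ffun i => rows i j]].

(* Z_2 = Pol({0,1}; {(x,y,z,x-y+z mod 2)}, {0}, {1}), on {0,1} = 'Z_2 = 'I_2 *)
Definition affine_rel (t : {ffun 'I_4 -> 'Z_2}) : Prop :=
  t (inord 3) = t (inord 0) - t (inord 1) + t (inord 2).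
Definition const_rel (c : 'Z_2) (t : {ffun 'I_1 -> 'Z_2}) : Prop :=
  t ord0 = c.

Definition Z2clone : opset 'Z_2 := fun n f =>
  preserves f affine_rel /\ preserves f (const_rel 0) /\ preserves f (const_rel 1).

(* d_i on {0,1,2} = 'I_3: minority if at most two distinct values, i otherwise *)
Definition d_op (i : 'I_3) : op 'I_3 3 :=
  [ffun x : {ffun 'I_3 -> 'I_3} =>
     let a := x (inord 0) in let b := x (inord 1) in let c := x (inord 2) in
     if a == b then c else if b == c then a else if a == c then b else i].

Definition minion_hom (A B : finType) (C : opset A) (D : opset B)
  (xi : forall n, op A n -> op B n) : Prop :=
  (forall n (f : op A n), C n f -> D n (xi n f)) /\
  (forall n r (sigma : 'I_n -> 'I_r) (f : op A n),
      C n f -> xi r (minor sigma f) = minor sigma (xi n f)).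

Definition minion_le (A B : finType) (C : opset A) (D : opset B) : Prop :=
  exists xi : forall n, op A n -> op B n, minion_hom C D xi.

Definition minion_equiv (A B : finType) (C : opset A) (D : opset B) : Prop :=
  minion_le C D /\ minion_le D C.

(* Main.v *)
Require Import Defs.
From Stdlib Require List.
From mathcomp Require Import all_boot all_algebra.
From mathcomp Require Import ring.
Set Implicit Arguments. Unset Strict Implicit. Unset Printing Implicit Defensive.
Import GRing.Theory.
Local Open Scope ring_scope.


Lemma z2_cases (a : 'Z_2) : a = 0 \/ a = 1.
Proof. case: a => [[|[|m]] Hm]; [left|right|by []]; exact/val_inj. Qed.

Lemma z2_add1 (a b : 'Z_2) : (a + b == 1) = (a == 1) (+) (b == 1).
Proof. by case: (z2_cases a) => ->; case: (z2_cases b) => ->. Qed.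

Lemma z2_3 (a : 'Z_2) : a + a + a = a.
Proof. by case: (z2_cases a) => ->; apply/eqP. Qed.

Lemma z2_natr (b : bool) : ((b%:R : 'Z_2) == 1) = b.
Proof. by case: b. Qed.

Lemma z2_eq1 (a : 'Z_2) : (a == 1)%:R = a.
Proof. by case: (z2_cases a) => ->; apply/eqP. Qed.

Lemma z2_aff (a0 a1 a2 b0 b1 b2 c0 c1 c2 : 'Z_2) :
  (a0 - a1 + a2) + (b0 - b1 + b2) + (c0 - c1 + c2) =
  (a0 + b0 + c0) - (a1 + b1 + c1) + (a2 + b2 + c2).
Proof. ring. Qed.

Definition o0 : 'I_3 := @Ordinal 3 0 isT.
Definition o1 : 'I_3 := @Ordinal 3 1 isT.
Definition o2 : 'I_3 := @Ordinal 3 2 isT.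

Definition Gp (i : 'I_3) (p0 p1 p2 : bool) : 'I_3 :=
  if p0 && ~~ p1 && ~~ p2 then o0 else
  if ~~ p0 && p1 && ~~ p2 then o1 else
  if ~~ p0 && ~~ p1 && p2 then o2 else i.

Definition par (c : nat) (vs : seq 'I_3) := odd (count (fun v : 'I_3 => val v == c) vs).
Definition gl i vs := Gp i (par 0 vs) (par 1 vs) (par 2 vs).

Definition dv i (a b c : 'I_3) : 'I_3 :=
  d_op i [ffun j : 'I_3 => if nat_of_ord j == 0%N then a else if nat_of_ord j == 1%N then b else c].

Lemma dvE i a b c : dv i a b c =
  if a == b then c else if b == c then a else if a == c then b else i.
Proof. by rewrite /dv /d_op !ffunE !inordK. Qed.

Lemma gl1 i v : gl i [:: v] = v.
Proof.
apply/val_inj; rewrite /gl /par /Gp /=.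
by case: v => [[|[|[|m]]] Hm].
Qed.

Lemma key i a1 a2 a3 r : gl i [:: a1, a2, a3 & r] =
  dv i (gl i (dv i a1 a2 a3 :: r)) (dv i (dv i a1 a2 a3) (gl i (a3 :: r)) a3)
       (dv i a1 a2 (gl i (a3 :: r))).
Proof.
apply/val_inj; rewrite !dvE /gl /par /= !oddD.
move: (odd (count _ r)) (odd (count _ r)) (odd (count _ r)) => q0 q1 q2.
case: i => [[|[|[|m]]] Hi] //;
case: a1 => [[|[|[|m]]] H1] //;
case: a2 => [[|[|[|m]]] H2] //;
case: a3 => [[|[|[|m]]] H3] //;
by case: q0; case: q1; case: q2.
Qed.

Definition comp3 i n (A B C : op 'I_3 n) : op 'I_3 n :=
  [ffun x => dv i (A x) (B x) (C x)].

Lemma Clo3_comp3 i n (A B C : op 'I_3 n) :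
  Clo3 (d_op i) A -> Clo3 (d_op i) B -> Clo3 (d_op i) C ->
  Clo3 (d_op i) (comp3 i A B C).
Proof.
move=> hA hB hC.
pose g := fun j : 'I_3 => if nat_of_ord j == 0%N then A else if nat_of_ord j == 1%N then B else C.
have := @Clo3_comp _ (d_op i) n g.
have -> : [ffun x => d_op i [ffun j => g j x]] = comp3 i A B C.
  by apply/ffunP => x; rewrite /comp3 !ffunE /dv /d_op !ffunE /g !inordK.
apply => j; rewrite /g; case: ifP => _ //; case: ifP => _ //.
Qed.

Definition glF i n (fs : seq (op 'I_3 n)) : op 'I_3 n :=
  [ffun x => gl i (map (fun f : op 'I_3 n => f x) fs)].

Lemma clo_gl i n (fs : seq (op 'I_3 n)) : odd (size fs) ->
  List.Forall (fun f => Clo3 (d_op i) f) fs -> Clo3 (d_op i) (glF i fs).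
Proof.
move: {2}(size fs) (leqnn (size fs)) => m; elim: m fs => [|m IH] fs.
  by rewrite leqn0 => /eqP ->.
case: fs => [|f1 [|f2 [|f3 r]]] //= Hs Hodd HF.
- have -> : glF i [:: f1] = f1 by apply/ffunP => x; rewrite ffunE /= gl1.
  by inversion HF.
- inversion HF as [|? ? Hc1 HF2]; inversion HF2 as [|? ? Hc2 HF3];
  inversion HF3 as [|? ? Hc3 HR].
  have hD := Clo3_comp3 Hc1 Hc2 Hc3.
  have hE : Clo3 (d_op i) (glF i (f3 :: r)).
    apply: IH => //=; try (by move: Hs; rewrite ltnS => /ltnW); try (by move: Hodd; rewrite !negbK); by constructor.
  have hA : Clo3 (d_op i) (glF i (comp3 i f1 f2 f3 :: r)).
    apply: IH => //=; try (by move: Hs; rewrite ltnS => /ltnW); try (by move: Hodd; rewrite !negbK); by constructor.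
  have -> : glF i [:: f1, f2, f3 & r] =
     comp3 i (glF i (comp3 i f1 f2 f3 :: r)) (comp3 i (comp3 i f1 f2 f3) (glF i (f3 :: r)) f3)
       (comp3 i f1 f2 (glF i (f3 :: r))).
    by apply/ffunP => y; rewrite /glF /comp3 !ffunE /= key !ffunE.
  by apply: Clo3_comp3 => //; apply: Clo3_comp3.
Qed.


Definition row4 (a b c d : 'Z_2) : {ffun 'I_4 -> 'Z_2} :=
  [ffun t : 'I_4 => match nat_of_ord t with 0 => a | 1 => b | 2 => c | _ => d end].

Lemma f_aff (n : nat) (f : op 'Z_2 n) (Hf : Z2clone f) (a b c : {ffun 'I_n -> 'Z_2}) :
  f [ffun k => a k - b k + c k] = f a - f b + f c.
Proof.
case: Hf => Ha _.
set r := fun k => row4 (a k) (b k) (c k) (a k - b k + c k).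
have := Ha r.
have E0 : [ffun i => r i (inord 0)] = a by apply/ffunP => k; rewrite !ffunE inordK.
have E1 : [ffun i => r i (inord 1)] = b by apply/ffunP => k; rewrite !ffunE inordK.
have E2 : [ffun i => r i (inord 2)] = c by apply/ffunP => k; rewrite !ffunE inordK.
have E3 : [ffun i => r i (inord 3)] = [ffun k => a k - b k + c k].
  by apply/ffunP => k; rewrite !ffunE inordK.
rewrite /affine_rel !ffunE E0 E1 E2 E3; apply => k.
by rewrite !ffunE !inordK.
Qed.

Lemma f_0 (n : nat) (f : op 'Z_2 n) (Hf : Z2clone f) : f [ffun _ => 0] = 0.
Proof.
case: Hf => _ [H0 _].
have := H0 (fun _ => [ffun _ => 0]).
rewrite /const_rel ffunE.
by rewrite /const_rel !ffunE; apply.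
Qed.

Lemma f_1 (n : nat) (f : op 'Z_2 n) (Hf : Z2clone f) : f [ffun _ => 1] = 1.
Proof.
case: Hf => _ [_ H1].
have := H1 (fun _ => [ffun _ => 1]).
by rewrite /const_rel !ffunE; apply.
Qed.

Lemma f_add (n : nat) (f : op 'Z_2 n) (Hf : Z2clone f) (a c : {ffun 'I_n -> 'Z_2}) : f [ffun k => a k + c k] = f a + f c.
Proof.
have := f_aff Hf a [ffun _ => 0] c; rewrite (f_0 Hf) subr0.
have -> : [ffun k => a k - [ffun _ => (0 : 'Z_2)] k + c k] = [ffun k => a k + c k].
  by apply/ffunP => k; rewrite !ffunE subr0.
by [].
Qed.

Definition ev (n : nat) (j : 'I_n) : {ffun 'I_n -> 'Z_2} := [ffun k => (k == j)%:R].

Lemma f_seq (n : nat) (f : op 'Z_2 n) (Hf : Z2clone f) (s : seq 'I_n) :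
  f [ffun k => (count_mem k s)%:R] = \sum_(j <- s) f (ev j).
Proof.
elim: s => [|j s IH].
  rewrite big_nil -(f_0 Hf); congr (f _); by apply/ffunP => k; rewrite !ffunE.
rewrite big_cons -IH -(f_add Hf); congr (f _); apply/ffunP => k; rewrite !ffunE /=.
by rewrite natrD eq_sym.
Qed.

Lemma f_lin (n : nat) (f : op 'Z_2 n) (Hf : Z2clone f) (z : {ffun 'I_n -> 'Z_2}) :
  f z = \sum_(j <- enum 'I_n | z j == 1) f (ev j).
Proof.
rewrite -big_filter -(f_seq Hf); congr (f _); apply/ffunP => k; rewrite ffunE.
rewrite count_uniq_mem; last by rewrite filter_uniq // enum_uniq.
rewrite (mem_filter (fun i => z i == 1)) mem_enum andbT.
by rewrite z2_eq1.
Qed.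

Lemma sum_par (n : nat) (f : op 'Z_2 n) (s : seq 'I_n) (P : pred 'I_n) :
  (\sum_(j <- s | P j) f (ev j) == 1) = odd (count (fun j => P j && (f (ev j) == 1)) s).
Proof.
elim: s => [|j s IH]; first by rewrite big_nil.
rewrite big_cons /=; case: (P j) => /=; last by rewrite add0n.
by rewrite z2_add1 IH oddD; case: (f (ev j) == 1).
Qed.


Definition ind n (x : {ffun 'I_n -> 'I_3}) (c : nat) : {ffun 'I_n -> 'Z_2} :=
  [ffun j => (nat_of_ord (x j) == c)%:R].
Definition xi i n (f : op 'Z_2 n) : op 'I_3 n :=
  [ffun x => Gp i (f (ind x 0) == 1) (f (ind x 1) == 1) (f (ind x 2) == 1)].

Lemma xi_minor i n r (sigma : 'I_n -> 'I_r) f :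
  xi i (minor sigma f) = minor sigma (xi i f).
Proof.
apply/ffunP => x; rewrite /xi /minor !ffunE.
by congr Gp; congr (_ == 1); congr (f _); apply/ffunP => j; rewrite !ffunE.
Qed.

Lemma Forall_proj i n (l : seq 'I_n) :
  List.Forall (fun g => Clo3 (d_op i) g) (map (@proj _ n) l).
Proof. elim: l => [|j l IH] /=; constructor => //; exact: Clo3_proj. Qed.

Lemma cmf (T U : Type) (g : T -> U) (a : pred U) (q : pred T) (s : seq T) :
  count a (map g (filter q s)) = count (fun t => a (g t) && q t) s.
Proof. by elim: s => [|t s IH] //=; case: (q t) => /=; rewrite IH //; case: (a (g t)). Qed.

Lemma xi_clo i n (f : op 'Z_2 n) : Z2clone f -> Clo3 (d_op i) (xi i f).
Proof.
move=> Hf; set l := [seq j <- enum 'I_n | f (ev j) == 1].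
have -> : xi i f = glF i (map (@proj _ n) l).
  apply/ffunP => x; rewrite /xi /glF !ffunE.
  have -> : [seq (g : op 'I_3 n) x | g <- map (@proj _ n) l] = map x l.
    by rewrite -map_comp; apply: eq_map => j; rewrite /= ffunE.
  rewrite /gl /par; congr Gp; rewrite (f_lin Hf) sum_par /l cmf;
  by congr odd; apply: eq_count => j; rewrite /= ffunE z2_natr.
apply: clo_gl; last exact: Forall_proj.
rewrite size_map /l size_filter.
have E : count (fun j => ([ffun _ => (1:'Z_2)] j == 1) && (f (ev j) == 1)) (enum 'I_n)
   = count (fun j => f (ev j) == 1) (enum 'I_n) by apply: eq_count => j; rewrite ffunE.
have := f_lin Hf [ffun _ => 1]; rewrite (f_1 Hf) => /esym/eqP.
by rewrite sum_par E.
Qed.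

Definition emb (z : 'Z_2) : 'I_3 := @Ordinal 3 (nat_of_ord z) (leq_trans (ltn_ord z) (isT : (2 <= 3)%N)).
Definition back (v : 'I_3) : 'Z_2 := if nat_of_ord v == 1%N then 1 else 0.

Lemma back_emb z : back (emb z) = z.
Proof. by case: (z2_cases z) => ->. Qed.

Lemma d_emb i (h : 'I_3 -> 'Z_2) :
  d_op i [ffun j => emb (h j)] = emb (h (inord 0) + h (inord 1) + h (inord 2)).
Proof.
rewrite ffunE !ffunE.
move: (h (inord 0)) (h (inord 1)) (h (inord 2)) => a b c.
by case: (z2_cases a) => ->; case: (z2_cases b) => ->; case: (z2_cases c) => ->; apply/val_inj.
Qed.

Definition xr n (f : op 'I_3 n) : op 'Z_2 n := [ffun x : {ffun 'I_n -> 'Z_2} => back (f [ffun j => emb (x j)])].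

Lemma xrE n (f : op 'I_3 n) (x : {ffun 'I_n -> 'Z_2}) : xr f x = back (f [ffun j => emb (x j)]).
Proof. by rewrite ffunE. Qed.

Lemma xr_minor n r (sigma : 'I_n -> 'I_r) f : xr (minor sigma f) = minor sigma (xr f).
Proof.
apply/ffunP => x; rewrite /xr /minor !ffunE.
by congr back; congr (f _); apply/ffunP => j; rewrite !ffunE.
Qed.

Lemma preserves_proj (A : finType) n k (R : {ffun 'I_k -> A} -> Prop) (j : 'I_n) :
  preserves (proj A j) R.
Proof.
move=> rows H.
have -> : [ffun j' => proj A j [ffun i => rows i j']] = rows j.
  by apply/ffunP => t; rewrite !ffunE.
exact: H.
Qed.

Lemma Z2_sum3 n (a b c : op 'Z_2 n) : Z2clone a -> Z2clone b -> Z2clone c ->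
  Z2clone [ffun x => a x + b x + c x].
Proof.
move=> [Aa [A0 A1]] [Ba [B0 B1]] [Ca [C0 C1]]; split; [|split].
- move=> rows H; move: (Aa rows H) (Ba rows H) (Ca rows H).
  rewrite /affine_rel !ffunE => -> -> ->; exact: z2_aff.
- move=> rows H; move: (A0 rows H) (B0 rows H) (C0 rows H).
  by rewrite /const_rel !ffunE => -> -> ->; apply/eqP.
- move=> rows H; move: (A1 rows H) (B1 rows H) (C1 rows H).
  by rewrite /const_rel !ffunE => -> -> ->; apply/eqP.
Qed.

Lemma xr_clo i n (f : op 'I_3 n) : Clo3 (d_op i) f ->
  (forall x : {ffun 'I_n -> 'Z_2}, f [ffun j => emb (x j)] = emb (xr f x)) /\ Z2clone (xr f).
Proof.
elim=> {n f} [n j | n g _ IH].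
- have E : xr (proj _ j) = proj _ j by apply/ffunP => x; rewrite xrE !ffunE back_emb.
  rewrite E; split; first by move=> x; rewrite !ffunE.
  by split; [|split]; apply: preserves_proj.
- set F := [ffun x => d_op i [ffun j => g j x]].
  have H : forall x : {ffun 'I_n -> 'Z_2}, F [ffun j => emb (x j)] =
      emb (xr (g (inord 0)) x + xr (g (inord 1)) x + xr (g (inord 2)) x).
    move=> x; rewrite /F ffunE.
    rewrite (_ : [ffun j => g j [ffun j0 => emb (x j0)]] = [ffun j => emb (xr (g j) x)]);
      first exact: d_emb.
    by apply/ffunP => j; rewrite ffunE [RHS]ffunE (IH j).1.
  have X : forall x : {ffun 'I_n -> 'Z_2}, xr F x = xr (g (inord 0)) x + xr (g (inord 1)) x + xr (g (inord 2)) x.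
    by move=> x; rewrite [LHS]xrE H back_emb.
  split; first by move=> x; rewrite H X.
  rewrite (_ : xr F = [ffun x => xr (g (inord 0)) x + xr (g (inord 1)) x + xr (g (inord 2)) x]).
    by apply: Z2_sum3; apply: (IH _).2.
  by apply/ffunP => x; rewrite X [RHS]ffunE.
Qed.

Theorem lemma7p1 : forall i : 'I_3, minion_equiv Z2clone (Clo3 (d_op i)).
Proof.
move=> i; split.
- exists (fun n f => xi i f); split.
    by move=> n f Hf; exact: xi_clo.
  by move=> n r sigma f _; exact: xi_minor.
- exists (fun n f => xr f); split.
    by move=> n f Hf; exact: (xr_clo Hf).2.
  by move=> n r sigma f _; exact: xr_minor.
Qed.
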